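(* Let $\operatorname{Cs}(4)=\{x,y,z\}$ be the quandle with multiplication $xx=x$, $yy=y$, $zz=z$, $xy=x$, $xz=y$, $yx=y$, $yz=x$, $zx=z$, $zy=z$. Then $\operatorname{Aut}(\mathbb{Z}[\operatorname{Cs}(4)])\cong\mathbb{Z}_2$.
   Context: For a quandle $Q$, the quandle ring $\mathbb{Z}[Q]$ is the free abelian group with basis $Q$, with multiplication $\big(\sum_i\alpha_i q_i\big)\big(\sum_j\beta_j q_j\big)=\sum_{i,j}\alpha_i\beta_j (q_iq_j)$. $\operatorname{Aut}(\mathbb{Z}[Q])$ denotes the group of ring automorphisms of $\mathbb{Z}[Q]$ (bijective additive maps preserving the multiplication). *)

(* Defs.v *)
From HB Require Import structures.
From mathcomp Require Import all_boot all_order all_algebra.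
Set Implicit Arguments. Unset Strict Implicit. Unset Printing Implicit Defensive.
Import GRing.Theory.
Local Open Scope ring_scope.

(* The quandle Cs(4) = {x, y, z}, encoded as 'I_3 with x = 0, y = 1, z = 2. *)
Definition cs4_nat (a b : nat) : nat :=
  match a, b with
  | 0, 2 => 1%N
  | 1, 2 => 0%N
  | _, _ => a
  end.

Definition Cs4 := 'I_3.
Definition cs4_mul (i j : Cs4) : Cs4 := inord (cs4_nat i j).

(* The quandle ring Z[Cs(4)]: the free abelian group with basis Cs(4),
   represented by coefficient functions Cs4 -> int. *)
Definition ZQ := {ffun Cs4 -> int}.

(* (sum_i a_i q_i)(sum_j b_j q_j) = sum_{i,j} a_i b_j (q_i q_j) *)
Definition ZQ_mul (u v : ZQ) : ZQ :=
  [ffun q => \sum_(i : Cs4) \sum_(j : Cs4 | cs4_mul i j == q) u i * v j].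

Definition is_ring_aut (f : ZQ -> ZQ) : Prop :=
  [/\ forall u v : ZQ, f (u + v) = f u + f v,
      bijective f &
      forall u v : ZQ, f (ZQ_mul u v) = ZQ_mul (f u) (f v)].

(* Main.v *)
Require Import Defs.
From mathcomp Require Import all_boot all_order all_algebra zify ring.
Set Implicit Arguments. Unset Strict Implicit. Unset Printing Implicit Defensive.
Import GRing.Theory.
Local Open Scope ring_scope.

Definition i0 : Cs4 := @Ordinal 3 0 isT.
Definition i1 : Cs4 := @Ordinal 3 1 isT.
Definition i2 : Cs4 := @Ordinal 3 2 isT.

Lemma cs4_cases (k : Cs4) : [\/ k = i0, k = i1 | k = i2].
Proof.
case: k => [[|[|[|n]]] Hn]; last by [].
- by constructor 1; apply: val_inj.
- by constructor 2; apply: val_inj.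
- by constructor 3; apply: val_inj.
Qed.

Lemma ZQ_ext (u v : ZQ) : u i0 = v i0 -> u i1 = v i1 -> u i2 = v i2 -> u = v.
Proof. by move=> h0 h1 h2; apply/ffunP => k; case: (cs4_cases k) => ->. Qed.

Lemma sumCs4 (F : Cs4 -> int) : \sum_(k : Cs4) F k = F i0 + F i1 + F i2.
Proof.
rewrite !big_ord_recl big_ord0 addr0 addrA.
by congr (F _ + F _ + F _); apply: val_inj.
Qed.

Lemma ZQ_mulE u v :
  [/\ ZQ_mul u v i0 = u i0 * (v i0 + v i1) + u i1 * v i2,
      ZQ_mul u v i1 = u i1 * (v i0 + v i1) + u i0 * v i2 &
      ZQ_mul u v i2 = u i2 * (v i0 + v i1 + v i2)].
Proof.
rewrite !ffunE !sumCs4 !(big_mkcond (fun j => cs4_mul _ j == _)) !sumCs4 /=.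
have e0 : inord 0 = i0 by apply: val_inj; rewrite /= inordK.
have e1 : inord 1 = i1 by apply: val_inj; rewrite /= inordK.
have e2 : inord 2 = i2 by apply: val_inj; rewrite /= inordK.
rewrite /cs4_mul /= e0 e1 e2 /=.
by split; ring.
Qed.
Lemma ab1 (a b : int) : a * b = 1 -> a = 1 \/ a = -1.
Proof. move=> h.
have [hb|hb] : (b <= 0 \/ 1 <= b)%R by lia.
- have [ha|ha] : (a <= 0 \/ 1 <= a)%R by lia.
  + right. have ha1 : a <= -1.
      case: (a =P 0) => [e|/eqP ne]; last lia.
      by rewrite e mul0r in h.
    have hb1 : b <= -1.
      case: (b =P 0) => [e|/eqP ne]; last lia.
      by rewrite e mulr0 in h.
    nia.
  + exfalso. nia.
- have [ha|ha] : (a <= 0 \/ 1 <= a)%R by lia.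
  + exfalso. nia.
  + left. nia.
Qed.
Lemma arith (p0 p1 q0 q1 r0 r1 r2 w2 x0 x1 x2 : int) :
 p0+p1= 1 -> q0+q1= 1 ->
 r0*(r0+r1)+r1* r2 = r0 -> r1*(r0+r1)+r0* r2 = r1 -> r2*(r0+r1+r2) = r2 ->
 p0*(r0+r1)+p1* r2 = q0 -> q0*(r0+r1)+q1* r2 = p0 ->
 w2* r2 = 1 ->
 x0* p0 + x1* q0 + x2* r0 = 1 -> x0* p1+x1* q1+x2* r1 = 0 -> x2 * r2 = 0 ->
 [/\ r0= 0, r1= 0, r2= 1 & ((p0= 1 /\ q0= 0) \/ (p0= 0 /\ q0= 1))].
Proof.
move=> hp hq h1 h2 h3 h4 h5 hw hx0 hx1 hx2.
have [e|e] : r2 = 1 \/ r2 = -1 by apply: (@ab1 r2 w2); rewrite mulrC.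
- subst r2. have er : r1 = - r0 by nia.
  subst r1. have r00 : r0 = 0 by nia. subst r0.
  have x20 : x2 = 0 by nia. subst x2.
  have hq0 : q0 = p1 by nia.
  have : (x0 - x1) * (2 * p0 - 1) = 1 by nia.
  move=> /ab1 [] h; split => //; lia.
- subst r2. exfalso. have er : r0 + r1 = 2 by nia.
  have er0 : r0 = 1 by nia. nia.
Qed.

Definition ev (k : Cs4) : ZQ := [ffun j => if j == k then 1 else 0].

Section Add.
Variable f : ZQ -> ZQ.
Hypothesis hadd : forall u v : ZQ, f (u + v) = f u + f v.

Lemma f0 : f 0 = 0.
Proof. have h := hadd 0 0; rewrite addr0 in h. by apply: (addrI (f 0)); rewrite -h addr0. Qed.

Lemma fN v : f (- v) = - f v.
Proof. by apply: (addrI (f v)); rewrite -hadd !subrr f0. Qed.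

Lemma fMn v n : f (v *+ n) = f v *+ n.
Proof. elim: n => [|n IH]; first by rewrite !mulr0n f0. by rewrite !mulrS hadd IH. Qed.

Lemma fMz v (n : int) : f (v *~ n) = f v *~ n.
Proof. case: n => n; first exact: fMn. by rewrite NegzE !mulrNz fN -!pmulrn fMn. Qed.

Lemma decomp (u : ZQ) : u = ev i0 *~ u i0 + ev i1 *~ u i1 + ev i2 *~ u i2.
Proof. by apply: ZQ_ext; rewrite !ffunE !ffunMzE !ffunE /= !mul0rz intz !addr0 ?add0r. Qed.

Lemma fcoord u k : f u k = u i0 * f (ev i0) k + u i1 * f (ev i1) k + u i2 * f (ev i2) k.
Proof.
have mz (m n : int) : m *~ n = n * m by rewrite mulrzz mulrC.
by rewrite {1}(decomp u) !hadd !fMz !ffunE !ffunMzE !mz. Qed.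
End Add.

Definition swi (k : Cs4) : Cs4 := if k == i0 then i1 else if k == i1 then i0 else k.
Definition sw (u : ZQ) : ZQ := [ffun k => u (swi k)].

Lemma swK : cancel sw sw.
Proof. move=> u; apply: ZQ_ext; by rewrite !ffunE. Qed.

Lemma sw_aut : is_ring_aut sw.
Proof.
split.
- by move=> u v; apply: ZQ_ext; rewrite !ffunE.
- by exists sw; apply: swK.
- have s0 : swi i0 = i1 by [].
  have s1 : swi i1 = i0 by [].
  have s2 : swi i2 = i2 by [].
  move=> u v; apply: ZQ_ext; rewrite ffunE ?s0 ?s1 ?s2;
  case: (ZQ_mulE u v) => A B C; case: (ZQ_mulE (sw u) (sw v)) => A' B' C';
  rewrite ?A ?B ?C ?A' ?B' ?C' !ffunE s0 s1 s2; ring.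
Qed.

Lemma id_aut : is_ring_aut id.
Proof. split => //; by exists id. Qed.

Lemma rid (w : ZQ) k : k != i2 -> ZQ_mul w (ev k) = w.
Proof.
case: (cs4_cases k) => -> // _; apply: ZQ_ext;
case: (ZQ_mulE w (ev i0)) => A B C; case: (ZQ_mulE w (ev i1)) => A' B' C';
rewrite ?A' ?B' ?C'; rewrite ?A ?B ?C !ffunE /=; ring.
Qed.

Lemma ee2 : ZQ_mul (ev i2) (ev i2) = ev i2.
Proof. apply: ZQ_ext; case: (ZQ_mulE (ev i2) (ev i2)) => A B C; rewrite ?A ?B ?C !ffunE /=; ring. Qed.
Lemma ee02 : ZQ_mul (ev i0) (ev i2) = ev i1.
Proof. apply: ZQ_ext; case: (ZQ_mulE (ev i0) (ev i2)) => A B C; rewrite ?A ?B ?C !ffunE /=; ring. Qed.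
Lemma ee12 : ZQ_mul (ev i1) (ev i2) = ev i0.
Proof. apply: ZQ_ext; case: (ZQ_mulE (ev i1) (ev i2)) => A B C; rewrite ?A ?B ?C !ffunE /=; ring. Qed.

Lemma classify f : is_ring_aut f -> f =1 id \/ f =1 sw.
Proof.
case=> hadd [g fK gK] hmul.
have rF k : k != i2 -> forall v, ZQ_mul v (f (ev k)) = v.
  by move=> hk v; rewrite -[v]gK -hmul rid.
set F0 := f (ev i0); set F1 := f (ev i1); set F2 := f (ev i2).
have h0 := rF i0 isT (ev i0); have h1 := rF i1 isT (ev i0).
have [a0 a1 a2] := ZQ_mulE (ev i0) F0.
have [b0 b1 b2] := ZQ_mulE (ev i0) F1.
have p0 : F0 i0 + F0 i1 = 1.
  by move: a0; rewrite h0 !ffunE /= => ->; ring.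
have p2 : F0 i2 = 0.
  by move: a1; rewrite h0 !ffunE /= => /esym; rewrite mul0r add0r mul1r.
have q0 : F1 i0 + F1 i1 = 1.
  by move: b0; rewrite h1 !ffunE /= => ->; ring.
have q2 : F1 i2 = 0.
  by move: b1; rewrite h1 !ffunE /= => /esym; rewrite mul0r add0r mul1r.
have E22 : ZQ_mul F2 F2 = F2 by rewrite -hmul ee2.
have E02 : ZQ_mul F0 F2 = F1 by rewrite -hmul ee02.
have E12 : ZQ_mul F1 F2 = F0 by rewrite -hmul ee12.
have [c0 c1 c2] := ZQ_mulE F2 F2.
have [d0 d1 d2] := ZQ_mulE F0 F2.
have [d0' d1' d2'] := ZQ_mulE F1 F2.
rewrite E22 in c0 c1 c2. rewrite E02 in d0 d1 d2. rewrite E12 in d0' d1' d2'.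
have s2 := fcoord hadd (g (ev i2)) i2.
have s0 := fcoord hadd (g (ev i0)) i0.
have s1 := fcoord hadd (g (ev i0)) i1.
have s02 := fcoord hadd (g (ev i0)) i2.
rewrite !gK !ffunE /= -/F0 -/F1 -/F2 in s2 s0 s1 s02.
rewrite p2 q2 !mulr0 !add0r in s2 s02.
have [r0 r1 r2 hp] := arith p0 q0 (esym c0) (esym c1) (esym c2)
  (esym d0) (esym d0') (esym s2) (esym s0) (esym s1) (esym s02).
have sw0 : swi i0 = i1 by [].
have sw1 : swi i1 = i0 by [].
have sw2 : swi i2 = i2 by [].
case: hp => [[e0 e1]|[e0 e1]]; [left|right] => u; apply: ZQ_ext;
  rewrite /= ?ffunE ?sw0 ?sw1 ?sw2 (fcoord hadd u) -/F0 -/F1 -/F2.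
all: have e0' : F0 i1 = 1 - F0 i0 by rewrite -p0; ring.
all: have e1' : F1 i1 = 1 - F1 i0 by rewrite -q0; ring.
all: rewrite ?e0' ?e1' ?e0 ?e1 ?p2 ?q2 ?r0 ?r1 ?r2; ring.
Qed.

Definition phi (a : 'Z_2) : ZQ -> ZQ := if a == 0 then id else sw.

Theorem theorem6p2 :
  exists phi : 'Z_2 -> (ZQ -> ZQ),
    [/\ (forall a, is_ring_aut (phi a)),
        (forall a b, phi (a + b) =1 phi a \o phi b),
        (forall a b, phi a =1 phi b -> a = b) &
        (forall f, is_ring_aut f -> exists a, phi a =1 f)].
Proof.
exists phi; split.
- move=> a; rewrite /phi; case: (a == 0); [exact: id_aut | exact: sw_aut].
- move=> [[|[|n]] Ha] [[|[|m]] Hb] // u; rewrite /phi /=.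
  by rewrite swK.
- move=> [[|[|n]] Ha] [[|[|m]] Hb] //; rewrite /phi /= => h.
  1-4: first [by apply: val_inj | exfalso; move: (h (ev i0)) => /(congr1 (fun w : ZQ => w i0)); rewrite !ffunE /=; by move/eqP].
- move=> f /classify [h|h]; [exists 0 | exists 1] => u; by rewrite h.
Qed.
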